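(* Let $\alpha\in(0,1]$ and $\beta\in(0,\alpha)$. Every $K\in\mathcal{K}$ satisfies \[ |K(x,y)-K(x',y')|\le3\|K\|(|x-x'|+|y-y'|)^\beta . \] If $K,K'\in\mathcal{K}$, then $K+K'\in\mathcal{K}$ with $\|K+K'\|\le\|K\|+\|K'\|$, and (for compatible matrix sizes) $KK'\in\mathcal{K}$ with $\|KK'\|\le6\|K\|\|K'\|$. Finally, if $K\in\mathcal{K}$ is everywhere invertible and $|K^{-1}|\le h$ for some finite $h$, then $K^{-1}\in\mathcal{K}$ and $\|K^{-1}\|\le5\max(1,h^3)\max(1,\|K\|^3)$.
   Context: $\mathbb{R}^d=\mathbb{R}^{d_u}\times\mathbb{R}^{d_s}$ with points $(x,y)$; matrix norms are operator norms. $\mathcal{K}=\mathcal{K}^{\alpha,\beta}$ is the class of matrix-valued functions $K$ on $\mathbb{R}^d$ for which there is a constant $C$ such that for all $x,x'\in\mathbb{R}^{d_u}$ and $y,y'\in\mathbb{R}^{d_s}$: $|K(x,y)|\le C$; $|K(x,y)-K(x',y)|\le C|x-x'|^\beta$; $|K(x,y)-K(x,y')|\le C|y-y'|^\alpha$; and $|K(x,y)-K(x',y)-K(x,y')+K(x',y')|\le C|x-x'|^\beta|y-y'|^{\alpha-\beta}$. For $K\in\mathcal{K}$, $\|K\|$ is the smallest such $C$. *)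

(* Defs.v *)
From HB Require Import structures.
From mathcomp Require Import all_boot all_order all_algebra.
From mathcomp Require Import classical_sets boolp reals exp.
Set Implicit Arguments. Unset Strict Implicit. Unset Printing Implicit Defensive.
Import Order.TTheory GRing.Theory Num.Theory.
Local Open Scope classical_set_scope.
Local Open Scope ring_scope.

(* Euclidean (Frobenius) norm of a matrix; on row/column vectors this is the
   Euclidean norm of R^n. *)
Definition enorm (R : realType) (p q : nat) (A : 'M[R]_(p, q)) : R :=
  Num.sqrt (\sum_(i < p) \sum_(j < q) A i j ^+ 2).

Definition opnorm (R : realType) (m n : nat) (A : 'M[R]_(m, n)) : R :=
  sup [set enorm (A *m v) | v in [set v : 'cV[R]_n | enorm v <= 1]].

(* Points of R^d = R^{du} x R^{ds} are pairs (x, y) of row vectors. *)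
Definition Kbound (R : realType) (du ds m n : nat) (alpha beta : R)
  (K : 'rV[R]_du -> 'rV[R]_ds -> 'M[R]_(m, n)) (C : R) : Prop :=
  forall (x x' : 'rV[R]_du) (y y' : 'rV[R]_ds),
    [/\ opnorm (K x y) <= C,
        opnorm (K x y - K x' y) <= C * powR (enorm (x - x')) beta,
        opnorm (K x y - K x y') <= C * powR (enorm (y - y')) alpha
      & opnorm (K x y - K x' y - K x y' + K x' y')
          <= C * powR (enorm (x - x')) beta * powR (enorm (y - y')) (alpha - beta)].

Definition inK (R : realType) (du ds m n : nat) (alpha beta : R)
  (K : 'rV[R]_du -> 'rV[R]_ds -> 'M[R]_(m, n)) : Prop :=
  exists C, Kbound alpha beta K C.

Definition Knorm (R : realType) (du ds m n : nat) (alpha beta : R)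
  (K : 'rV[R]_du -> 'rV[R]_ds -> 'M[R]_(m, n)) : R :=
  inf [set C | Kbound alpha beta K C].

(* Main.v *)
Require Import Defs.
From HB Require Import structures.
From mathcomp Require Import all_boot all_order all_algebra.
From mathcomp Require Import classical_sets boolp reals exp.
From mathcomp Require Import ring lra.
Import Order.TTheory GRing.Theory Num.Theory.
Local Open Scope ring_scope.

Set Implicit Arguments. Unset Strict Implicit.
Section Aux.
Variable R : realType.

Lemma CS (I : finType) (F G : I -> R) :
  (\sum_i F i * G i) ^+ 2 <= (\sum_i F i ^+ 2) * (\sum_i G i ^+ 2).
Proof.
set a := \sum_i F i ^+ 2; set b := \sum_i G i ^+ 2; set c := \sum_i F i * G i.
have q t : 0 <= t ^+ 2 * a + (2 * t) * c + b.
  have -> : t ^+ 2 * a + (2 * t) * c + b = \sum_i (t * F i + G i) ^+ 2.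
    rewrite /a /b /c !mulr_sumr -!big_split /=; apply: eq_bigr => i _; ring.
  by apply: sumr_ge0 => i _; exact: sqr_ge0.
have a0 : 0 <= a by apply: sumr_ge0 => i _; exact: sqr_ge0.
have b0 : 0 <= b by apply: sumr_ge0 => i _; exact: sqr_ge0.
case: (eqVneq a 0) => [aE|an0].
  have F0 i : F i = 0.
    apply/eqP; rewrite -sqrf_eq0; apply/eqP.
    by apply: (psumr_eq0P _ aE) => // j _; exact: sqr_ge0.
  rewrite /c big1 ?expr0n ?mulr_ge0 // => i _; by rewrite F0 mul0r.
have ap : 0 < a by rewrite lt_neqAle eq_sym an0 a0.
have := q (- c / a).
have -> : (- c / a) ^+ 2 * a + 2 * (- c / a) * c + b = (a * b - c ^+ 2) / a.
  by field; rewrite an0.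
by rewrite pmulr_lge0 ?invr_gt0 // subr_ge0 mulrC.
Qed.

Lemma sumsq_ge0 (I : finType) (F : I -> R) : 0 <= \sum_i F i ^+ 2.
Proof. by apply: sumr_ge0 => i _; exact: sqr_ge0. Qed.

Lemma enorm_cV n (v : 'cV[R]_n) : enorm v = Num.sqrt (\sum_i v i ord0 ^+ 2).
Proof. by rewrite /enorm; congr Num.sqrt; apply: eq_bigr => i _; rewrite big_ord1. Qed.

Lemma enorm_ge0 p q (A : 'M[R]_(p, q)) : 0 <= enorm A.
Proof. exact: sqrtr_ge0. Qed.

Lemma enorm0 p q : enorm (0 : 'M[R]_(p, q)) = 0.
Proof.
rewrite /enorm big1 ?sqrtr0 // => i _; rewrite big1 // => j _.
by rewrite mxE expr0n.
Qed.

Lemma enormZ n c (v : 'cV[R]_n) : enorm (c *: v) = `|c| * enorm v.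
Proof.
rewrite !enorm_cV -sqrtr_sqr -sqrtrM ?sqr_ge0 //; congr Num.sqrt.
rewrite mulr_sumr; apply: eq_bigr => i _; rewrite mxE; ring.
Qed.

Lemma enormN n (v : 'cV[R]_n) : enorm (- v) = enorm v.
Proof. by rewrite -scaleN1r enormZ normrN1 mul1r. Qed.

Lemma enormD n (u v : 'cV[R]_n) : enorm (u + v) <= enorm u + enorm v.
Proof.
rewrite !enorm_cV.
set a := \sum_i u i ord0 ^+ 2; set b := \sum_i v i ord0 ^+ 2.
set c := \sum_i u i ord0 * v i ord0.
have a0 : 0 <= a by exact: sumsq_ge0.
have b0 : 0 <= b by exact: sumsq_ge0.
have -> : \sum_i (u + v) i ord0 ^+ 2 = a + 2 * c + b.
  rewrite /a /b /c mulr_sumr -!big_split /=; apply: eq_bigr => i _; rewrite mxE; ring.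
have hc : c <= Num.sqrt a * Num.sqrt b.
  rewrite -sqrtrM // (le_trans (ler_norm c)) // -sqrtr_sqr ler_sqrt ?mulr_ge0 //.
  exact: CS.
have s0 : 0 <= Num.sqrt a + Num.sqrt b by rewrite addr_ge0 ?sqrtr_ge0.
rewrite -(ger0_norm s0) -sqrtr_sqr ler_sqrt ?sqr_ge0 //.
have -> : (Num.sqrt a + Num.sqrt b) ^+ 2 = a + 2 * (Num.sqrt a * Num.sqrt b) + b.
  by rewrite sqrrD !sqr_sqrtr //; ring.
by rewrite lerD2r lerD2l ler_wpM2l.
Qed.

Lemma enorm_mul m n (A : 'M[R]_(m, n)) (v : 'cV[R]_n) :
  enorm (A *m v) <= enorm A * enorm v.
Proof.
rewrite !enorm_cV /enorm -sqrtrM; last by apply: sumr_ge0 => i _; exact: sumsq_ge0.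
rewrite ler_sqrt; last by rewrite mulr_ge0 //; [apply: sumr_ge0 => i _|]; exact: sumsq_ge0.
rewrite mulr_suml; apply: ler_sum => i _; rewrite mxE; exact: CS.
Qed.


Local Open Scope classical_set_scope.

Definition OS m n (A : 'M[R]_(m, n)) :=
  [set enorm (A *m v) | v in [set v : 'cV[R]_n | enorm v <= 1]].

Lemma OS_ne m n (A : 'M[R]_(m, n)) : OS A !=set0.
Proof. by exists (enorm (A *m (0 : 'cV[R]_n))); exists 0 => //=; rewrite enorm0. Qed.

Lemma OS_ub m n (A : 'M[R]_(m, n)) : has_ubound (OS A).
Proof.
exists (enorm A) => _ [v /= hv <-].
by rewrite (le_trans (enorm_mul A v)) // ler_piMr ?enorm_ge0.
Qed.

Lemma opnorm_le1 m n (A : 'M[R]_(m, n)) (v : 'cV[R]_n) : enorm v <= 1 -> enorm (A *m v) <= opnorm A.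
Proof. by move=> hv; apply: (ub_le_sup (OS_ub A)); exists v. Qed.

Lemma opnorm_ge0 m n (A : 'M[R]_(m, n)) : 0 <= opnorm A.
Proof.
by rewrite (le_trans (enorm_ge0 (A *m (0 : 'cV[R]_n)))) // opnorm_le1 // enorm0.
Qed.

Lemma opnorm_lub m n (A : 'M[R]_(m, n)) c :
  (forall v : 'cV[R]_n, enorm v <= 1 -> enorm (A *m v) <= c) -> opnorm A <= c.
Proof. by move=> h; apply: ge_sup (OS_ne A) _ => _ [v /= hv <-]; exact: h. Qed.

Lemma opnorm_vec m n (A : 'M[R]_(m, n)) (v : 'cV[R]_n) : enorm (A *m v) <= opnorm A * enorm v.
Proof.
case: (eqVneq (enorm v) 0) => [v0|vn0].
  by rewrite v0 mulr0 (le_trans (enorm_mul A v)) // v0 mulr0.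
have vp : 0 < enorm v by rewrite lt_neqAle eq_sym vn0 enorm_ge0.
have := opnorm_le1 A (v := (enorm v)^-1 *: v).
rewrite enormZ -scalemxAr enormZ ger0_norm ?invr_ge0 ?enorm_ge0 // mulVf //.
move=> /(_ (lexx _)); rewrite -(ler_pM2r vp) mulrAC mulVf // mul1r; exact.
Qed.

Lemma opnormD m n (A B : 'M[R]_(m, n)) : opnorm (A + B) <= opnorm A + opnorm B.
Proof.
apply: opnorm_lub => v hv; rewrite mulmxDl (le_trans (enormD _ _)) //.
by rewrite lerD // opnorm_le1.
Qed.

Lemma opnormN m n (A : 'M[R]_(m, n)) : opnorm (- A) = opnorm A.
Proof.
apply/eqP; rewrite eq_le; apply/andP; split; apply: opnorm_lub => v hv.
  by rewrite mulNmx enormN opnorm_le1.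
by rewrite -enormN -mulNmx opnorm_le1.
Qed.

Lemma opnormB m n (A B : 'M[R]_(m, n)) : opnorm (A - B) <= opnorm A + opnorm B.
Proof. by rewrite (le_trans (opnormD _ _)) // opnormN. Qed.

Lemma opnormBC m n (A B : 'M[R]_(m, n)) : opnorm (A - B) = opnorm (B - A).
Proof. by rewrite -opnormN opprB. Qed.

Lemma opnormM m n p (A : 'M[R]_(m, n)) (B : 'M[R]_(n, p)) :
  opnorm (A *m B) <= opnorm A * opnorm B.
Proof.
apply: opnorm_lub => v hv; rewrite -mulmxA (le_trans (opnorm_vec _ _)) //.
rewrite ler_wpM2l ?opnorm_ge0 // (le_trans (opnorm_vec _ _)) //.
by rewrite ler_piMr ?opnorm_ge0.
Qed.


Lemma inf_closed (S : set R) (f t : R) : S !=set0 -> has_lbound S -> 0 <= t ->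
  (forall C, S C -> f <= C * t) -> f <= inf S * t.
Proof.
move=> Sn Sl t0 h; apply/ler_addgt0Pr => e e0.
have t1 : 0 < t + 1 by rewrite ltr_wpDl.
have ep : 0 < e / (t + 1) by rewrite divr_gt0.
have [C SC hC] := inf_adherent ep (conj Sn Sl).
rewrite (le_trans (h C SC)) // (le_trans (ler_wpM2r t0 (ltW hC))) // mulrDl lerD2l.
rewrite -{2}(divfK (lt0r_neq0 t1) e) -/(e / (t + 1)) ler_wpM2l ?ltW //.
by rewrite ltrDl.
Qed.

Variables (du ds : nat) (alpha beta : R).

Lemma Kbound_ge0 m n (K : 'rV[R]_du -> 'rV[R]_ds -> 'M[R]_(m, n)) C :
  Kbound alpha beta K C -> 0 <= C.
Proof. by move=> /(_ 0 0 0 0) [h _ _ _]; exact: le_trans (opnorm_ge0 _) h. Qed.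

Lemma KS_lb m n (K : 'rV[R]_du -> 'rV[R]_ds -> 'M[R]_(m, n)) :
  has_lbound [set C | Kbound alpha beta K C].
Proof. by exists 0 => C /Kbound_ge0. Qed.

Lemma Knorm_le m n (K : 'rV[R]_du -> 'rV[R]_ds -> 'M[R]_(m, n)) C :
  Kbound alpha beta K C -> Knorm alpha beta K <= C.
Proof. by move=> hC; exact: (ge_inf (KS_lb K)). Qed.

Lemma Kbound_Knorm m n (K : 'rV[R]_du -> 'rV[R]_ds -> 'M[R]_(m, n)) :
  inK alpha beta K -> Kbound alpha beta K (Knorm alpha beta K).
Proof.
move=> [C0 hC0].
have Sn : [set C | Kbound alpha beta K C] !=set0 by exists C0.
have Sl := KS_lb K.
move=> x x' y y'; split.
- rewrite -[Knorm _ _ _]mulr1; apply: inf_closed => // C /(_ x x' y y') [h _ _ _].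
  by rewrite mulr1.
- by apply: inf_closed => // [|C /(_ x x' y y') [_ h _ _] //]; exact: powR_ge0.
- by apply: inf_closed => // [|C /(_ x x' y y') [_ _ h _] //]; exact: powR_ge0.
- rewrite -mulrA; apply: inf_closed => //; first by rewrite mulr_ge0 ?powR_ge0.
  by move=> C /(_ x x' y y') [_ _ _ h]; rewrite mulrA.
Qed.


Lemma max1_1 (x : R) : 0 <= x -> x <= Num.max 1 (x ^+ 3).
Proof.
move=> x0; rewrite le_max; case: (lerP x 1) => [//|x1] /=.
by rewrite ler_eXnr // ltW.
Qed.

Lemma max1_2 (x : R) : 0 <= x -> x ^+ 2 <= Num.max 1 (x ^+ 3).
Proof.
move=> x0; rewrite le_max; case: (lerP x 1) => [x1|x1].
  by rewrite exprn_ile1.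
apply/orP; right; rewrite (exprS x 2) ler_peMl //.
  exact: exprn_ge0.
exact: ltW.
Qed.

Lemma max1_ge1 (x : R) : 1 <= Num.max 1 x.
Proof. by rewrite le_max lexx. Qed.

Lemma powR_exp_mono (b r s : R) : 0 <= b <= 1 -> 0 < s -> s <= r -> powR b r <= powR b s.
Proof.
move=> /andP[b0 b1] s0 sr.
case: (eqVneq b 0) => [->|bn0].
  by rewrite !powR0 // gt_eqF // (lt_le_trans s0 sr).
by apply: ger_powR => //; rewrite b1 andbT lt_neqAle eq_sym bn0.
Qed.

Lemma powR_ge1 (b r : R) : 1 <= b -> 0 <= r -> 1 <= powR b r.
Proof. by move=> b1 r0; rewrite -(powRr0 b) ler_powR. Qed.

Hypotheses (ha0 : 0 < alpha) (hb0 : 0 < beta) (hba : beta < alpha).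

Lemma minb (f C b : R) : 0 <= C -> 0 <= b -> f <= C + C -> f <= C * powR b alpha ->
  f <= 2 * C * powR b (alpha - beta).
Proof.
move=> C0 b0 h1 h2; have ab : 0 < alpha - beta by rewrite subr_gt0.
case: (lerP b 1) => [b1|b1].
  apply: (le_trans h2); apply: (@le_trans _ _ (C * powR b (alpha - beta))).
    by rewrite ler_wpM2l // powR_exp_mono ?b0 // lerBlDr lerDl ltW.
  by rewrite -mulrA ler_peMl ?mulr_ge0 ?powR_ge0 ?ler1n.
apply: (le_trans h1); have -> : C + C = 2 * C by ring.
rewrite ler_peMr ?mulr_ge0 //.
by rewrite powR_ge1 ?ltW.
Qed.

Lemma minb1 (f C a b : R) : 0 <= C -> 0 <= a -> 0 <= b -> f <= C + C ->
  f <= C * powR b alpha -> f <= 2 * C * powR (a + b) beta.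
Proof.
move=> C0 a0 b0 h1 h2.
case: (lerP b 1) => [b1|b1].
  apply: (le_trans h2); apply: (@le_trans _ _ (C * powR (a + b) beta)).
    rewrite ler_wpM2l // (@le_trans _ _ (powR b beta)) //.
      by rewrite powR_exp_mono ?b0 // ltW.
    by apply: ge0_ler_powR; rewrite ?nnegrE ?addr_ge0 ?lerDr // ltW.
  by rewrite -mulrA ler_peMl ?mulr_ge0 ?powR_ge0 ?ler1n.
apply: (le_trans h1); have -> : C + C = 2 * C by ring.
rewrite ler_peMr ?mulr_ge0 //.
apply: powR_ge1; last exact: ltW.
by rewrite (le_trans (ltW b1)) // lerDr.
Qed.


Section Zm.
Variable V : zmodType.
Implicit Types a b c d : V.
Lemma subr_trans a b c : a - b + (b - c) = a - c.
Proof. by rewrite addrA subrK. Qed.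
Lemma sub4 a b c d : a - b - c + d = (a - b) - (c - d).
Proof. by rewrite opprB addrA addrAC. Qed.
Lemma sub4' a b c d : a - b - c + d = - ((b - a) - (d - c)).
Proof. by rewrite [RHS]opprB [in RHS]opprB [RHS]addrC addrAC addrA. Qed.
Lemma subDD a a' b b' : (a + a') - (b + b') = (a - b) + (a' - b').
Proof. by rewrite opprD addrACA. Qed.
End Zm.

Lemma part2 m n (K K' : 'rV[R]_du -> 'rV[R]_ds -> 'M[R]_(m, n)) C C' :
  Kbound alpha beta K C -> Kbound alpha beta K' C' ->
  Kbound alpha beta (fun x y => K x y + K' x y) (C + C').
Proof.
move=> hK hK' x x' y y'.
have [k1 k2 k3 k4] := hK x x' y y'; have [l1 l2 l3 l4] := hK' x x' y y'.
split.
- exact: (le_trans (opnormD _ _) (lerD k1 l1)).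
- rewrite subDD mulrDl; exact: (le_trans (opnormD _ _) (lerD k2 l2)).
- rewrite subDD mulrDl; exact: (le_trans (opnormD _ _) (lerD k3 l3)).
- rewrite (subDD (K x y)) (subDD (K x y - K x' y)) addrACA !mulrDl.
  exact: (le_trans (opnormD _ _) (lerD k4 l4)).
Qed.


Lemma L1 m n p (A B : 'M[R]_(m, n)) (g h : 'M[R]_(n, p)) :
  A *m g - B *m h = (A - B) *m g + B *m (g - h).
Proof. by rewrite mulmxBl mulmxBr subr_trans. Qed.

Lemma L2 m n p (a b : 'M[R]_(m, n)) (G H : 'M[R]_(n, p)) :
  a *m G - b *m H = a *m (G - H) + (a - b) *m H.
Proof. by rewrite mulmxBr mulmxBl subr_trans. Qed.

Lemma opM m n p (A : 'M[R]_(m, n)) (B : 'M[R]_(n, p)) u v :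
  opnorm A <= u -> opnorm B <= v -> opnorm (A *m B) <= u * v.
Proof.
move=> hA hB; rewrite (le_trans (opnormM _ _)) // ler_pM ?opnorm_ge0 //.
Qed.

Lemma part3 m n p (K : 'rV[R]_du -> 'rV[R]_ds -> 'M[R]_(m, n))
  (K' : 'rV[R]_du -> 'rV[R]_ds -> 'M[R]_(n, p)) C C' :
  Kbound alpha beta K C -> Kbound alpha beta K' C' ->
  Kbound alpha beta (fun x y => K x y *m K' x y) (6 * C * C').
Proof.
move=> hK hK' x x' y y'.
have C0 := Kbound_ge0 hK; have C'0 := Kbound_ge0 hK'.
set a' := powR (enorm (x - x')) beta.
set b' := powR (enorm (y - y')) (alpha - beta).
set b1 := powR (enorm (y - y')) alpha.
have a'0 : 0 <= a' by exact: powR_ge0.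
have b'0 : 0 <= b' by exact: powR_ge0.
have b10 : 0 <= b1 by exact: powR_ge0.
have [k1 k2 k3 k4] := hK x x' y y'; have [l1 l2 l3 l4] := hK' x x' y y'.
have [k1' _ k3' _] := hK x' x' y y'; have [_ k2' _ _] := hK x x' y' y'.
have [k1'' _ _ _] := hK x x y' y'; have [k4' _ _ _] := hK x' x y' y'.
have [l1' l2' _ _] := hK' x x' y' y'.
have p0 : 0 <= C * C' by rewrite mulr_ge0.
split => /=.
- apply: (le_trans (opM k1 l1)).
  rewrite -mulrA ler_peMl ?mulr_ge0 //.
  by rewrite ler1n.
- rewrite (L1 (K x y) (K x' y) (K' x y) (K' x' y)).
  apply: (le_trans (opnormD _ _)); apply: (le_trans (lerD (opM k2 l1) (opM k1' l2))).
  have -> : C * a' * C' + C * (C' * a') = 2 * (C * C' * a') by ring.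
  have -> : 6 * C * C' * a' = 6 * (C * C' * a') by ring.
  apply: ler_wpM2r; first by rewrite !mulr_ge0.
  by rewrite ler_nat.
- rewrite (L1 (K x y) (K x y') (K' x y) (K' x y')).
  apply: (le_trans (opnormD _ _)); apply: (le_trans (lerD (opM k3 l1) (opM k1'' l3))).
  have -> : C * b1 * C' + C * (C' * b1) = 2 * (C * C' * b1) by ring.
  have -> : 6 * C * C' * b1 = 6 * (C * C' * b1) by ring.
  apply: ler_wpM2r; first by rewrite !mulr_ge0.
  by rewrite ler_nat.
- have e : K x y *m K' x y - K x' y *m K' x' y - K x y' *m K' x y' + K x' y' *m K' x' y'
    = ((K x y - K x' y) - (K x y' - K x' y')) *m K' x y
      + (K x y' - K x' y') *m (K' x y - K' x y')
      + (K x' y *m ((K' x y - K' x' y) - (K' x y' - K' x' y'))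
      + (K x' y - K x' y') *m (K' x y' - K' x' y')).
    rewrite sub4 (L1 (K x y) (K x' y) (K' x y) (K' x' y)).
    rewrite (L1 (K x y') (K x' y') (K' x y') (K' x' y')) subDD.
    rewrite (L1 (K x y - K x' y) (K x y' - K x' y') (K' x y) (K' x y')).
    by rewrite (L2 (K x' y) (K x' y') (K' x y - K' x' y) (K' x y' - K' x' y')).
  rewrite e; clear e.
  rewrite sub4 in k4; rewrite sub4 in l4.
  have g13 : opnorm (K' x y - K' x y') <= 2 * C' * b'.
    apply: minb => //; first exact: enorm_ge0.
    exact: (le_trans (opnormB _ _) (lerD l1 l1')).
  have f24 : opnorm (K x' y - K x' y') <= 2 * C * b'.
    apply: minb => //; first exact: enorm_ge0.
    exact: (le_trans (opnormB _ _) (lerD k1' k4')).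
  apply: (le_trans (opnormD _ _)).
  apply: (le_trans (lerD (opnormD _ _) (opnormD _ _))).
  apply: (le_trans (lerD (lerD (opM k4 l1) (opM k2' g13)) (lerD (opM k1' l4) (opM f24 l2')))).
  have -> : 6 * C * C' * a' * b' = C * a' * b' * C' + C * a' * (2 * C' * b') +
     (C * (C' * a' * b') + 2 * C * b' * (C' * a')) by ring.
  exact: lexx.
Qed.

Lemma Linv n (A B : 'M[R]_n) : A \in unitmx -> B \in unitmx ->
  invmx A - invmx B = invmx A *m (B - A) *m invmx B.
Proof.
move=> uA uB; rewrite mulmxBr mulmxBl -(mulmxA (invmx A) B) (mulmxV uB) mulmx1.
by rewrite (mulVmx uA) mul1mx.
Qed.

Lemma part4 n (K : 'rV[R]_du -> 'rV[R]_ds -> 'M[R]_n) C h :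
  Kbound alpha beta K C -> (forall x y, K x y \in unitmx) ->
  (forall x y, opnorm (invmx (K x y)) <= h) ->
  Kbound alpha beta (fun x y => invmx (K x y))
    (5 * Num.max 1 (h ^+ 3) * Num.max 1 (C ^+ 3)).
Proof.
move=> hK hu hh x x' y y'.
have C0 := Kbound_ge0 hK.
have h0 : 0 <= h := le_trans (opnorm_ge0 _) (hh x y).
set M := Num.max 1 (h ^+ 3); set N := Num.max 1 (C ^+ 3).
have M1 : 1 <= M := max1_ge1 _. have N1 : 1 <= N := max1_ge1 _.
have MN0 : 0 <= M * N by rewrite mulr_ge0 // (le_trans ler01).
have hm1 : h ^+ 2 * C <= M * N by rewrite ler_pM ?exprn_ge0 ?max1_2 ?max1_1.
have hm2 : h ^+ 3 * C ^+ 2 <= M * N.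
  by rewrite ler_pM ?exprn_ge0 ?max1_2 // /M le_max lexx orbT.
set a' := powR (enorm (x - x')) beta.
set b' := powR (enorm (y - y')) (alpha - beta).
set b1 := powR (enorm (y - y')) alpha.
have a'0 : 0 <= a' by exact: powR_ge0.
have b'0 : 0 <= b' by exact: powR_ge0.
have b10 : 0 <= b1 by exact: powR_ge0.
have [k1 k2 k3 k4] := hK x x' y y'.
have [k1' _ k3' _] := hK x' x' y y'; have [_ k2' _ _] := hK x x' y' y'.
have [k1'' _ _ _] := hK x x y' y'; have [k4' _ _ _] := hK x' x y' y'.
have J1 := hh x y; have J2 := hh x' y; have J3 := hh x y'; have J4 := hh x' y'.
split => /=.
- apply: (le_trans J1).
  have hM : h <= M by exact: max1_1.
  have : M * 1 <= M * N by rewrite ler_wpM2l // (le_trans ler01).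
  lra.
- rewrite (Linv (hu x y) (hu x' y)) opnormBC in k2 *.
  have := opM (opM J1 k2) J2.
  have q := ler_wpM2r a'0 hm1.
  have q0 : 0 <= M * N * a' by rewrite mulr_ge0.
  have -> : h * (C * a') * h = h ^+ 2 * C * a' by ring.
  lra.
- rewrite (Linv (hu x y) (hu x y')) opnormBC in k3 *.
  have := opM (opM J1 k3) J3.
  have q := ler_wpM2r b10 hm1.
  have q0 : 0 <= M * N * b1 by rewrite mulr_ge0.
  have -> : h * (C * b1) * h = h ^+ 2 * C * b1 by ring.
  lra.
- rewrite sub4' opnormN.
  rewrite (Linv (hu x' y) (hu x y)) (Linv (hu x' y') (hu x y')).
  set J1m := invmx (K x y); set J2m := invmx (K x' y).
  set J3m := invmx (K x y'); set J4m := invmx (K x' y').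
  rewrite (L1 (J2m *m (K x y - K x' y)) (J4m *m (K x y' - K x' y')) J1m J3m).
  rewrite (L2 J2m J4m (K x y - K x' y) (K x y' - K x' y')) mulmxDl.
  rewrite (Linv (hu x' y) (hu x' y')) (Linv (hu x y) (hu x y')) -/J1m -/J2m -/J3m -/J4m.
  rewrite sub4 in k4.
  have f24 : opnorm (K x' y' - K x' y) <= 2 * C * b'.
    rewrite opnormBC; apply: minb => //; first exact: enorm_ge0.
    exact: (le_trans (opnormB _ _) (lerD k1' k4')).
  have f13 : opnorm (K x y' - K x y) <= 2 * C * b'.
    rewrite opnormBC; apply: minb => //; first exact: enorm_ge0.
    exact: (le_trans (opnormB _ _) (lerD k1 k1'')).
  apply: (le_trans (opnormD _ _)).
  apply: (le_trans (lerD (opnormD _ _) (lexx _))).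
  apply: (le_trans (lerD (lerD (opM (opM J2 k4) J1) (opM (opM (opM (opM J2 f24) J4) k2') J1))
     (opM (opM J4 k2') (opM (opM J1 f13) J3)))).
  have ab0 : 0 <= a' * b' by rewrite mulr_ge0.
  have q1 := ler_wpM2r ab0 hm1; have q2 := ler_wpM2r ab0 hm2.
  have q0 : 0 <= M * N * (a' * b') by rewrite mulr_ge0.
  have -> : 5 * M * N * a' * b' = 5 * (M * N * (a' * b')) by ring.
  have -> : h * (C * a' * b') * h + h * (2 * C * b') * h * (C * a') * h +
    h * (C * a') * (h * (2 * C * b') * h) =
    h ^+ 2 * C * (a' * b') + 4 * (h ^+ 3 * C ^+ 2 * (a' * b')) by ring.
  lra.
Qed.

End Aux.
Unset Implicit Arguments.

Theorem mainTheorem10 (R : realType) (du ds : nat) (alpha beta : R)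
  (ha0 : 0 < alpha) (ha1 : alpha <= 1) (hb0 : 0 < beta) (hba : beta < alpha) :
  [/\ (forall (m n : nat) (K : 'rV[R]_du -> 'rV[R]_ds -> 'M[R]_(m, n)),
         inK alpha beta K ->
         forall (x x' : 'rV[R]_du) (y y' : 'rV[R]_ds),
           opnorm (K x y - K x' y') <=
             3 * Knorm alpha beta K * powR (enorm (x - x') + enorm (y - y')) beta),
      (forall (m n : nat) (K K' : 'rV[R]_du -> 'rV[R]_ds -> 'M[R]_(m, n)),
         inK alpha beta K -> inK alpha beta K' ->
         inK alpha beta (fun x y => K x y + K' x y) /\
         Knorm alpha beta (fun x y => K x y + K' x y)
           <= Knorm alpha beta K + Knorm alpha beta K'),
      (forall (m n p : nat) (K : 'rV[R]_du -> 'rV[R]_ds -> 'M[R]_(m, n))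
              (K' : 'rV[R]_du -> 'rV[R]_ds -> 'M[R]_(n, p)),
         inK alpha beta K -> inK alpha beta K' ->
         inK alpha beta (fun x y => K x y *m K' x y) /\
         Knorm alpha beta (fun x y => K x y *m K' x y)
           <= 6 * Knorm alpha beta K * Knorm alpha beta K')
    & (forall (n : nat) (K : 'rV[R]_du -> 'rV[R]_ds -> 'M[R]_n) (h : R),
         inK alpha beta K ->
         (forall x y, K x y \in unitmx) ->
         (forall x y, opnorm (invmx (K x y)) <= h) ->
         inK alpha beta (fun x y => invmx (K x y)) /\
         Knorm alpha beta (fun x y => invmx (K x y))
           <= 5 * Num.max 1 (h ^+ 3) * Num.max 1 (Knorm alpha beta K ^+ 3))].
Proof.
split.
- move=> m n K hK x x' y y'.
  have hC := Kbound_Knorm hK.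
  set C := Knorm alpha beta K in hC *.
  have C0 := Kbound_ge0 hC.
  have [_ k2 _ _] := hC x x' y y'.
  have [k1 _ k3 _] := hC x' x' y y'.
  have [k1' _ _ _] := hC x' x' y' y'.
  set a := enorm (x - x') in k2 *; set b := enorm (y - y') in k3 *.
  have a0 : 0 <= a by exact: enorm_ge0.
  have b0 : 0 <= b by exact: enorm_ge0.
  rewrite -(subr_trans (K x y) (K x' y) (K x' y')).
  apply: (le_trans (opnormD _ _)).
  have h2 : opnorm (K x' y - K x' y') <= 2 * C * powR (a + b) beta.
    apply: (minb1 hb0 hba C0 a0 b0 _ k3).
    exact: (le_trans (opnormB _ _) (lerD k1 k1')).
  have h1 : opnorm (K x y - K x' y) <= C * powR (a + b) beta.
    apply: (le_trans k2); apply: ler_wpM2l => //.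
    by apply: ge0_ler_powR; rewrite ?nnegrE ?addr_ge0 ?lerDl // ltW.
  apply: (le_trans (lerD h1 h2)).
  have -> : 3 * C * powR (a + b) beta = C * powR (a + b) beta + 2 * C * powR (a + b) beta.
    by ring.
  exact: lexx.
- move=> m n K K' hK hK'.
  have hb := part2 (Kbound_Knorm hK) (Kbound_Knorm hK').
  by split; [exists (Knorm alpha beta K + Knorm alpha beta K') | exact: Knorm_le hb].
- move=> m n p K K' hK hK'.
  have hb := part3 hb0 hba (Kbound_Knorm hK) (Kbound_Knorm hK').
  by split; [eexists; exact: hb | exact: Knorm_le hb].
- move=> n K h hK hu hh.
  have hb := part4 hb0 hba (Kbound_Knorm hK) hu hh.
  by split; [eexists; exact: hb | exact: Knorm_le hb].
Qed.
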